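(* Let $d\ge 1$ and $L\ge 2$, and let $|\phi_{\mathrm{w},d}(\theta)\rangle$ be the $d$-dimensional Ising whip state defined in the context. Then, with $\theta_d=\pi/(2d)$, $$|\phi_{\mathrm{w},d}(-\theta_d)\rangle=\tfrac{1}{\sqrt2}\big(|0\rangle^{\otimes L^d}+|1\rangle^{\otimes L^d}\big),\qquad |\phi_{\mathrm{w},d}(\theta_d)\rangle=\tfrac{1}{\sqrt2}\big(|s\rangle+|\bar s\rangle\big),$$ where $|s\rangle$ is the computational basis state with bit $s_x=(x_1+\dots+x_d)\bmod 2$ at site $x$ and $|\bar s\rangle$ is its bitwise complement. Consequently these are ground states of $H_J=J\sum_{\langle i,j\rangle}Z_iZ_j$ (sum over nearest-neighbour pairs of the lattice) for $J=-1$ and $J=+1$ respectively, with energy $-d(L-1)L^{d-1}$.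
   Context: Lattice $\Lambda=\{0,\dots,L-1\}^d$ with one qubit per site, $N=L^d$. Directed edges $x\to x+e_k$ ($e_k$ the $k$-th unit vector) whenever both endpoints lie in $\Lambda$. For a site $v$, $\deg^-(v)$ is the number of incoming edges. For each edge $u\to v$ define the gate $G_{u\to v}(\theta)=\exp\!\big(-\mathrm{i}\,\tfrac{d}{\deg^-(v)}\,\theta\, Z_uY_v/2\big)$, where $X,Y,Z$ are Pauli matrices. The whip state is $|\phi_{\mathrm{w},d}(\theta)\rangle=\prod G_{u\to v}(\theta)\,|+\rangle^{\otimes N}$, where $|+\rangle=(|0\rangle+|1\rangle)/\sqrt2$ and the gates are applied in order of increasing layer index $\sum_k v_k$ of the target $v$ (gates whose targets lie in the same layer commute, so their relative order is irrelevant). *)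

(* Defs.v *)
From HB Require Import structures.
From mathcomp Require Import all_boot all_order all_algebra.
From mathcomp Require Import reals trigo.
From mathcomp Require Import complex.
Set Implicit Arguments. Unset Strict Implicit. Unset Printing Implicit Defensive.
Import Order.TTheory GRing.Theory Num.Theory.
Local Open Scope ring_scope.

Section Whip.
Variables (R : realType) (d L : nat).

Definition site := {ffun 'I_d -> 'I_L}.
(* Computational-basis configurations: one bit per site (true = |1⟩). *)
Definition config := {ffun site -> bool}.
(* State vectors in (C^2)^{⊗N}: amplitudes indexed by basis configurations. *)
Definition state := config -> R[i].

Definition toC (x : R) : R[i] := Complex x 0.

Definition layer (x : site) : nat := \sum_(k < d) (x k : nat).

(* A directed edge x -> x + e_k is encoded by the pair (x, k);
   it is an edge iff x + e_k still lies in Λ. *)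
Definition is_edge (e : site * 'I_d) : bool := ((e.1 e.2).+1 < L)%N.
Definition tgt (e : site * 'I_d) : site :=
  [ffun j => if j == e.2 then insubd (e.1 j) (e.1 j).+1 else e.1 j].
Definition src (e : site * 'I_d) : site := e.1.

Definition indeg (v : site) : nat :=
  #|[set e : site * 'I_d | is_edge e && (tgt e == v)]|.

(* Pauli operators acting on states. Z|b⟩ = (-1)^b |b⟩,
   Y|0⟩ = i|1⟩, Y|1⟩ = -i|0⟩. *)
Definition flip (v : site) (c : config) : config :=
  [ffun x => if x == v then ~~ c x else c x].
Definition zsign (b : bool) : R[i] := if b then -1 else 1.
Definition Zop (u : site) (psi : state) : state := fun c => zsign (c u) * psi c.
Definition Yop (v : site) (psi : state) : state :=
  fun c => (if c v then Complex 0 1 else Complex 0 (-1)) * psi (flip v c).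

(* exp(-i α P) for the Pauli string P = Z_u Y_v (P^2 = 1):
   exp(-i α P) = cos α · 1 - i sin α · P. *)
Definition expPauliZY (alpha : R) (u v : site) (psi : state) : state :=
  fun c => (toC (cos alpha)) * psi c
           - Complex 0 1 * (toC (sin alpha)) * Zop u (Yop v psi) c.

Definition gate (theta : R) (e : site * 'I_d) (psi : state) : state :=
  expPauliZY ((d%:R / (indeg (tgt e))%:R) * theta / 2) (src e) (tgt e) psi.

Definition edges_ordered : seq (site * 'I_d) :=
  sort (fun e1 e2 => layer (tgt e1) <= layer (tgt e2))%N
       [seq e <- enum {: site * 'I_d} | is_edge e].

Definition plus_state : state :=
  fun _ => (toC ((Num.sqrt 2)^-1 ^+ #|{: site}|)).

Definition whip_state (theta : R) : state :=
  foldl (fun psi e => gate theta e psi) plus_state edges_ordered.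

Definition basis_state (b : config) : state := fun c => if c == b then 1 else 0.

Definition ghz_state : state :=
  fun c => toC (Num.sqrt 2)^-1 *
           (basis_state [ffun => false] c + basis_state [ffun => true] c).

Definition s_config : config := [ffun x => odd (layer x)].
Definition sbar_config : config := [ffun x => ~~ odd (layer x)].
Definition neel_state : state :=
  fun c => toC (Num.sqrt 2)^-1 * (basis_state s_config c + basis_state sbar_config c).

(* H_J = J Σ_{⟨i,j⟩} Z_i Z_j; each nearest-neighbour pair is exactly one
   directed edge x -> x + e_k. *)
Definition ising_H (J : R) (psi : state) : state :=
  fun c => toC J * (\sum_(e : site * 'I_d | is_edge e)
                     zsign (c (src e)) * zsign (c (tgt e))) * psi c.

Definition inner (phi psi : state) : R[i] :=
  \sum_(c : config) conjc (phi c) * psi c.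

Definition ground_state (H : state -> state) (E : R) (psi : state) : Prop :=
  (exists c, psi c != 0) /\
  (forall c, H psi c = toC E * psi c) /\
  (forall phi : state, toC E * inner phi phi <= inner phi (H phi)).

End Whip.

(* Main.v *)
Require Import Defs.
From HB Require Import structures.
From mathcomp Require Import all_boot all_order all_algebra.
From mathcomp Require Import reals trigo.
From mathcomp Require Import complex.
From mathcomp Require Import ring lra.
From Stdlib Require Import FunctionalExtensionality.
Set Implicit Arguments. Unset Strict Implicit. Unset Printing Implicit Defensive.
Import Order.TTheory GRing.Theory Num.Theory.
Section Geom.
Variables (d L : nat).
Local Notation St := (site d L).
Local Notation Ed := (St * 'I_d)%type.

Lemma tgt_val (e : Ed) j : is_edge e ->
  (tgt e j : nat) = (if j == e.2 then (e.1 j).+1 else e.1 j).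
Proof.
rewrite /is_edge => he; rewrite /tgt ffunE; case: eqP => [->|//].
by rewrite val_insubd he.
Qed.

Lemma layer_tgt (e : Ed) : is_edge e -> layer (tgt e) = (layer (src e)).+1.
Proof.
move=> he; rewrite /layer (bigD1 e.2) //= [in RHS](bigD1 e.2) //=.
rewrite tgt_val // eqxx addSn; congr (_ + _).+1.
by apply: eq_bigr => j /negbTE hj; rewrite tgt_val // hj.
Qed.

Lemma src_neq_tgt (e : Ed) : is_edge e -> src e != tgt e.
Proof.
move=> he; apply/negP => /eqP h.
by have := layer_tgt he; rewrite -h => /eqP; rewrite ltn_eqF.
Qed.

Lemma layer0P (v : St) : layer v = 0 -> forall k, (v k : nat) = 0.
Proof.
move=> h k; apply/eqP; rewrite -leqn0 -h /layer (bigD1 k) //=.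
exact: leq_addr.
Qed.

Lemma layer0_uniq (v w : St) : layer v = 0 -> layer w = 0 -> v = w.
Proof.
move=> hv hw; apply/ffunP => k; apply: val_inj => /=.
by rewrite (layer0P hv k) (layer0P hw k).
Qed.

Lemma indeg_pos (v : St) : layer v != 0 -> 0 < indeg v.
Proof.
move=> hv; case: (pickP (fun k => 0 < v k)) => [k hk | h]; last first.
  by move: hv; rewrite /layer big1 // => k _; apply/eqP; rewrite -leqn0 leqNgt h.
pose u : St := [ffun j => if j == k then insubd (v k) (v k).-1 else v j].
have uk : (u k : nat) = (v k).-1.
  rewrite ffunE eqxx val_insubd.
  by rewrite (leq_ltn_trans (leq_pred _) (ltn_ord _)).
have he : is_edge (u, k) by rewrite /is_edge /= uk prednK.
have ht : tgt (u, k) = v.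
  apply/ffunP => j; apply: val_inj => /=; rewrite tgt_val //=.
  case: eqP => [->|/eqP hj]; first by rewrite uk prednK.
  by rewrite ffunE (negbTE hj).
apply/card_gt0P; exists (u, k); by rewrite inE he ht eqxx.
Qed.

Definition Eo := edges_ordered d L.

Lemma mem_Eo e : (e \in Eo) = is_edge e.
Proof. by rewrite /Eo /edges_ordered mem_sort mem_filter mem_enum andbT. Qed.

Lemma uniq_Eo : uniq Eo.
Proof. by rewrite /Eo /edges_ordered sort_uniq filter_uniq // enum_uniq. Qed.

Lemma pairwise_Eo : pairwise (fun e1 e2 : Ed => layer (tgt e1) <= layer (tgt e2))%N Eo.
Proof.
rewrite /Eo /edges_ordered -sorted_pairwise.
  by apply: sort_sorted => x y; exact: leq_total.
by move=> x y z; exact: leq_trans.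
Qed.

Lemma card_lt_ord n : #|[pred i : 'I_n | (i.+1 < n)%N]| = n.-1.
Proof.
case: n => [|n].
  by apply/eqP; rewrite -leqn0 (leq_trans (max_card _)) // card_ord.
have -> : n.+1.-1 = #|predC1 (@ord_max n)| by rewrite cardC1 card_ord.
apply: eq_card => i; rewrite !inE ltnS.
by rewrite ltn_neqAle -ltnS ltn_ord andbT -val_eqE.
Qed.

Lemma card_edges_k (k : 'I_d) :
  #|[pred x : St | ((x k).+1 < L)%N]| = (L.-1 * L ^ d.-1)%N.
Proof.
pose F (j : 'I_d) : pred 'I_L := if j == k then [pred i : 'I_L | (i.+1 < L)%N] else predT.
have -> : #|[pred x : St | ((x k).+1 < L)%N]| = #|(family F : simpl_pred St)|.
  apply: eq_card => x; rewrite !inE; apply/idP/familyP => [h j|h].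
    by rewrite /F; case: eqP => [->|] //.
  by have := h k; rewrite /F eqxx.
rewrite card_family foldrE big_image /= (bigD1 k) //= /F eqxx card_lt_ord.
congr (_ * _)%N.
rewrite (eq_bigr (fun _ => L)); last first.
  by move=> j /negbTE ->; rewrite card_ord.
by rewrite prod_nat_const cardC1 card_ord.
Qed.

Lemma card_edges : #|[pred e : Ed | is_edge e]| = (d * (L - 1) * L ^ (d - 1))%N.
Proof.
rewrite -sum1_card big_mkcond /= -(pair_big xpredT xpredT (fun x k => if is_edge (x, k) then 1 else 0)%N) /=.
rewrite exchange_big /=.
transitivity (\sum_(j < d) (L.-1 * L ^ d.-1))%N.
  apply: eq_bigr => k _.
  rewrite -(card_edges_k k) -sum1_card [RHS]big_mkcond /=.
  by apply: eq_bigr => x _; rewrite inE.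
by rewrite sum_nat_const card_ord !subn1 mulnA.
Qed.
End Geom.
Local Open Scope ring_scope.
Local Open Scope complex_scope.

Section Dyn.
Variables (R : realType) (d L : nat).
Local Notation St := (site d L).
Local Notation Ed := (St * 'I_d)%type.
Local Notation Cf := (config d L).

Definition sgR (b : bool) : R := if b then -1 else 1.
Definition amp (beta : R) (x : bool) : R := if x then sin beta else cos beta.
Definition rgate (al : R) (u v : St) (f : Cf -> R) : Cf -> R :=
  fun c => cos al * f c + (if c v then 1 else -1) * sgR (c u) * sin al * f (flip v c).
Definition alpha (th : R) (e : Ed) : R := (d%:R / (indeg (tgt e))%:R) * th / 2.

Lemma toCE (x : R) : toC x = x%:C. Proof. by []. Qed.

Lemma gate_toC th e (f : Cf -> R) :
  gate th e (fun c => toC (f c)) = fun c => toC (rgate (alpha th e) (src e) (tgt e) f c).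
Proof.
apply: functional_extensionality => c.
rewrite /gate /expPauliZY /Zop /Yop /rgate /alpha /zsign /sgR.
case: (c (tgt e)); case: (c (src e)); rewrite /toC; apply/eqP; rewrite eq_complex /=;
  apply/andP; split; apply/eqP; ring.
Qed.

Lemma amp_step (be al : R) (x z : bool) :
  cos al * amp be x + (if x then 1 else -1) * sgR z * sin al * amp be (~~ x)
  = amp (be + sgR z * al) x.
Proof.
rewrite /amp /sgR; case: x; case: z; rewrite ?mulN1r ?mul1r /= ?sinD ?cosD ?sinN ?cosN; ring.
Qed.

Lemma cos_pi4 : cos (pi / 4%:R) = (Num.sqrt 2)^-1 :> R.
Proof.
have hs : sin (pi / 4%:R) = cos (pi / 4%:R) :> R.
  by rewrite -cosBpihalf -cosN; congr cos; field.
have hc2 : cos (pi / 4%:R) ^+ 2 = 2^-1 :> R.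
  have := cos2Dsin2 (pi / 4%:R : R); rewrite hs => h; lra.
have hpos : 0 < cos (pi / 4%:R) :> R.
  apply: cos_gt0_pihalf; have := @pi_gt0 R; move=> hp; apply/andP; split; lra.
rewrite -sqrtrV // -hc2 sqrtr_sqr gtr0_norm //.
Qed.

Lemma sin_pi4 : sin (pi / 4%:R) = (Num.sqrt 2)^-1 :> R.
Proof.
by rewrite -cos_pi4 -cosBpihalf -cosN; congr cos; field.
Qed.


Variable nb : bool.
Definition sgn : R := sgR (~~ nb).
Definition th : R := sgn * (pi / (2 * d)%:R).
Definition gb (b : bool) (v : St) : bool := b (+) (nb && odd (layer v)).
Definition beta (P : seq Ed) (v : St) (b : bool) : R :=
  pi / 4%:R + \sum_(e <- P | tgt e == v) sgR (gb b (src e)) * alpha th e.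
Definition T (P : seq Ed) (b : bool) (v : St) (x : bool) : R :=
  if layer v == 0%N then ((x == b)%:R) else amp (beta P v b) x.
Definition Fs (P : seq Ed) (c : Cf) : R :=
  \sum_(b : bool) (Num.sqrt 2)^-1 * \prod_(v : St) T P b v (c v).

Lemma ampq (s x : bool) : amp (pi / 4%:R + sgR s * (pi / 4%:R)) x = (x == ~~ s)%:R.
Proof.
case: s; rewrite /sgR /=.
  have -> : pi / 4%:R + -1 * (pi / 4%:R) = 0 :> R by ring.
  by case: x; rewrite /amp ?sin0 ?cos0.
have -> : pi / 4%:R + 1 * (pi / 4%:R) = pi / 2 :> R by field.
by case: x; rewrite /amp ?sin_pihalf ?cos_pihalf.
Qed.

Lemma sgRM a b : sgR a * sgR b = sgR (a (+) b).
Proof. by case: a; case: b; rewrite /sgR /=; ring. Qed.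

Lemma final_amp P u b x : (0 < d)%N -> layer u != 0%N -> uniq P ->
  (forall e, e \in P -> is_edge e) ->
  (forall e, is_edge e -> tgt e = u -> e \in P) ->
  T P b u x = (x == gb b u)%:R.
Proof.
move=> hd hu hU hP hC; rewrite /T (negbTE hu) /beta.
have hk : (0 < indeg u)%N := indeg_pos hu.
set k := indeg u in hk *.
set gs := b (+) (nb && ~~ odd (layer u)).
rewrite big_seq_cond (eq_bigr (fun _ => sgR gs * (d%:R / k%:R * th / 2))); last first.
  move=> e /andP [he /eqP ht]; have hE := hP e he; rewrite /alpha ht /gb.
  have -> : odd (layer (src e)) = ~~ odd (layer u) by rewrite -ht layer_tgt //= negbK.
  by [].
rewrite -big_seq_cond big_const_seq iter_addr_0.
have -> : count (fun e => tgt e == u) P = k.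
  rewrite /k /indeg -size_filter.
  have /card_uniqP <- := filter_uniq (fun e => tgt e == u) hU.
  apply: eq_card => e; rewrite inE mem_filter.
  apply/andP/andP => [[/eqP ht hin]|[he /eqP ht]].
    by split; [apply: hP | apply/eqP].
  by split; [apply/eqP | apply: hC].
rewrite -[_ *+ k]mulr_natr.
have -> : sgR gs * (d%:R / k%:R * th / 2) * k%:R = sgR (gs (+) ~~ nb) * (pi / 4%:R).
  rewrite -sgRM /th /sgn natrM; field.
  by rewrite !pnatr_eq0 -!lt0n hd hk.
rewrite ampq; congr (_ == _)%:R.
by rewrite /gs /gb; clear gs; case: nb; case: b; case: (odd _).
Qed.

Lemma step P e c : (0 < d)%N -> is_edge e -> uniq P ->
  (forall e', e' \in P -> is_edge e') ->
  (forall e', is_edge e' -> tgt e' = src e -> e' \in P) ->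
  rgate (alpha th e) (src e) (tgt e) (Fs P) c = Fs (rcons P e) c.
Proof.
move=> hd he hU hP hC.
have huv : src e != tgt e := src_neq_tgt he.
set u := src e in huv hC *; set v := tgt e in huv *.
have hv0 : layer v != 0%N by rewrite /v layer_tgt.
have hTu b x : T P b u x = (x == gb b u)%:R.
  case: (eqVneq (layer u) 0%N) => h0.
    by rewrite /T h0 eqxx /gb h0 /= andbF addbF.
  exact: final_amp.
have hTP' b w x : w != v -> T (rcons P e) b w x = T P b w x.
  move=> hw; rewrite /T /beta big_rcons.
  have -> : (tgt e == w) = false by rewrite eq_sym; exact: negbTE.
  by rewrite Monoid.mulm1.
have hTv' b x : T (rcons P e) b v x = amp (beta P v b + sgR (gb b u) * alpha th e) x.
  by rewrite /T (negbTE hv0) /beta big_rcons -/v eqxx addrA.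
have hTv b x : T P b v x = amp (beta P v b) x by rewrite /T (negbTE hv0).
rewrite /rgate /Fs !mulr_sumr -big_split /=; apply: eq_bigr => b _.
have e1 : \prod_w T P b w (flip v c w) = T P b v (~~ c v) * \prod_(w | w != v) T P b w (c w).
  rewrite (bigD1 v) //= /flip ffunE eqxx; congr (_ * _).
  by apply: eq_bigr => w hw; rewrite ffunE (negbTE hw).
have e2 : \prod_w T P b w (c w) = T P b v (c v) * \prod_(w | w != v) T P b w (c w).
  exact: bigD1.
have e3 : \prod_w T (rcons P e) b w (c w) =
    amp (beta P v b + sgR (gb b u) * alpha th e) (c v) * \prod_(w | w != v) T P b w (c w).
  rewrite (bigD1 v) //= hTv'; congr (_ * _).
  by apply: eq_bigr => w hw; exact: hTP'.
have e4 : \prod_(w | w != v) T P b w (c w) =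
    (c u == gb b u)%:R * \prod_(w | (w != v) && (w != u)) T P b w (c w).
  by rewrite (bigD1 u) //= hTu.
rewrite e1 e2 e3 e4 -amp_step !hTv.
case: (eqVneq (c u) (gb b u)) => [-> | hne]; rewrite /=; ring.
Qed.

Lemma Fs_nil c : (0 < L)%N -> Fs [::] c = (Num.sqrt 2)^-1 ^+ #|{: St}|.
Proof.
move=> hL0.
pose r : St := [ffun => Ordinal hL0].
have hr0 : layer r = 0%N by rewrite /layer big1 // => k _; rewrite ffunE.
have hT b v x : T [::] b v x = if v == r then (x == b)%:R else (Num.sqrt 2)^-1.
  rewrite /T /beta big_nil addr0; case: (eqVneq v r) => [->|hne]; first by rewrite hr0 eqxx.
  have -> : (layer v == 0%N) = false.
    by apply/negbTE/eqP => h; move/eqP: hne; apply; exact: layer0_uniq.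
  by case: x; rewrite /amp ?sin_pi4 ?cos_pi4.
have hp b : \prod_(v : St) T [::] b v (c v) =
    (c r == b)%:R * (Num.sqrt 2)^-1 ^+ #|{: St}|.-1.
  rewrite (bigD1 r) // hT eqxx; congr (_ * _).
  rewrite (eq_bigr (fun _ => (Num.sqrt 2)^-1)); last by move=> v hv; rewrite hT (negbTE hv).
  rewrite prodr_const; congr (_ ^+ _); rewrite -(cardC1 r).
  by apply: eq_card => i; rewrite !inE.
have hN : #|{: St}| = (#|{: St}|.-1).+1.
  by rewrite prednK //; apply/card_gt0P; exists r.
rewrite /Fs big_bool !hp [in RHS]hN exprS.
move: (#|{: St}|.-1) => n.
by case: (c r); rewrite /=; ring.
Qed.

Lemma fold_inv s1 s2 : (0 < d)%N -> (0 < L)%N -> Eo d L = s1 ++ s2 ->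
  foldl (fun psi e => gate th e psi) (@plus_state R d L) s1 = fun c => toC (Fs s1 c).
Proof.
move=> hd hL0; elim/last_ind: s1 s2 => [|s e IH] s2 hE.
  by apply: functional_extensionality => c; rewrite /= /plus_state Fs_nil.
have hE' : Eo d L = s ++ e :: s2 by rewrite hE cat_rcons.
rewrite foldl_rcons (IH (e :: s2) hE') gate_toC.
apply: functional_extensionality => c; congr toC.
have hmem : forall e', e' \in s -> is_edge e'.
  by move=> e' he'; rewrite -mem_Eo hE' mem_cat he'.
have he : is_edge e by rewrite -mem_Eo hE' mem_cat inE eqxx orbT.
apply: step => //.
- by have := uniq_Eo d L; rewrite hE' cat_uniq => /and3P [].
- move=> e' he' ht.
  have : e' \in Eo d L by rewrite mem_Eo.
  rewrite hE' mem_cat inE => /orP [//|/orP [/eqP hee|hin]].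
    by move: (src_neq_tgt he); rewrite -ht hee eqxx.
  have := pairwise_Eo d L; rewrite hE' pairwise_cat /= => /and3P [_ _ /andP [/allP h _]].
  have := h e' hin; rewrite ht layer_tgt //.
  by rewrite ltnn.
Qed.

Lemma Fs_final c : (0 < d)%N ->
  Fs (Eo d L) c = \sum_(b : bool) (Num.sqrt 2)^-1 * (c == [ffun v => gb b v])%:R.
Proof.
move=> hd; rewrite /Fs; apply: eq_bigr => b _; congr (_ * _).
have hT v x : T (Eo d L) b v x = (x == gb b v)%:R.
  case: (eqVneq (layer v) 0%N) => h0.
    by rewrite /T h0 eqxx /gb h0 /= andbF addbF.
  apply: final_amp => //; first exact: uniq_Eo.
    by move=> e; rewrite mem_Eo.
  by move=> e he _; rewrite mem_Eo.
under eq_bigr do rewrite hT.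
case: eqP => [-> | hne].
  by rewrite big1 // => v _; rewrite ffunE eqxx.
case: (pickP (fun v => c v != gb b v)) => [v hv | hall].
  by rewrite (bigD1 v) //= (negbTE hv) mul0r.
exfalso; apply: hne; apply/ffunP => v; rewrite ffunE.
by have := hall v => /negbFE/eqP.
Qed.

Lemma whip_eq : (0 < d)%N -> (0 < L)%N ->
  @whip_state R d L th = fun c => toC (\sum_(b : bool) (Num.sqrt 2)^-1 * (c == [ffun v => gb b v])%:R).
Proof.
move=> hd hL0; rewrite /whip_state (@fold_inv _ [::]) ?cats0 //.
by apply: functional_extensionality => c; rewrite Fs_final.
Qed.

End Dyn.

Section Ground.
Variables (R : realType) (d L : nat).

Lemma zsignE b : zsign R b = (@sgR R b)%:C.
Proof. by case: b; rewrite /zsign /sgR ?rmorphN1 ?rmorph1. Qed.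

Lemma ground_gen (J E : R) (psi : state R d L) :
  (J = 1 \/ J = -1) -> E = - (#|[pred e : site d L * 'I_d | is_edge e]|)%:R ->
  (exists c, psi c != 0) ->
  (forall c, psi c != 0 -> forall e, is_edge e ->
     J * @sgR R (c (src e)) * @sgR R (c (tgt e)) = -1) ->
  ground_state (ising_H J) E psi.
Proof.
move=> hJ -> hex hpsi; split => //; split.
  move=> c; rewrite /ising_H; case: (eqVneq (psi c) 0) => [->|hc]; first by rewrite !mulr0.
  congr (_ * _).
  rewrite mulr_sumr (eq_bigr (fun _ => -1)); last first.
    move=> e he; rewrite !zsignE toCE -!rmorphM mulrA (hpsi c hc e he) rmorphN1 //.
  by rewrite sumr_const toCE rmorphN rmorph_nat mulNrn.
move=> phi; rewrite /inner -subr_ge0 mulr_sumr -sumrB; apply: sumr_ge0 => c _.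
rewrite /ising_H; set S := \sum_(e | is_edge e) zsign R (c (src e)) * zsign R (c (tgt e)).
have key : toC J * S - toC (- (#|[pred e : site d L * 'I_d | is_edge e]|)%:R) =
    \sum_(e | is_edge e) (J * @sgR R (c (src e)) * @sgR R (c (tgt e)) + 1)%:C.
  rewrite (eq_bigr (fun e => J%:C * (zsign R (c (src e)) * zsign R (c (tgt e))) + 1)); last first.
    by move=> e _; rewrite !zsignE rmorphD rmorph1 !rmorphM mulrA.
  by rewrite big_split /= -mulr_sumr sumr_const !toCE rmorphN rmorph_nat opprK.
rewrite (_ : _ - _ = (phi c * conjc (phi c)) * (toC J * S -
   toC (- (#|[pred e : site d L * 'I_d | is_edge e]|)%:R))); last by ring.
apply: mulr_ge0; first exact: mulcJ_ge0.
rewrite key; apply: sumr_ge0 => e _; rewrite ler0c.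
by case: hJ => ->; case: (c (src e)); case: (c (tgt e)); rewrite /sgR; lra.
Qed.

End Ground.

Lemma toC_neq0 (R : realType) (x : R) : x != 0 -> toC x != 0.
Proof.
move=> hx; have -> : (0 : R[i]) = toC 0 by rewrite toCE rmorph0.
by apply/negP => /eqP /complexI /eqP; apply/negP.
Qed.

Lemma w_neq0 (R : realType) : (Num.sqrt 2)^-1 != 0 :> R.
Proof. by rewrite invr_eq0 sqrtr_eq0 -ltNge ltr0n. Qed.

Unset Implicit Arguments.
Local Close Scope complex_scope.

Theorem mainTheorem1 (R : realType) (d L : nat) (hd : (1 <= d)%N) (hL : (2 <= L)%N) :
  let theta_d : R := pi / (2 * d)%:R in
  let E : R := - ((d * (L - 1) * L ^ (d - 1))%N)%:R in
  @whip_state R d L (- theta_d) = @ghz_state R d L /\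
  @whip_state R d L theta_d = @neel_state R d L /\
  @ground_state R d L (@ising_H R d L (-1)) E (@whip_state R d L (- theta_d)) /\
  @ground_state R d L (@ising_H R d L 1) E (@whip_state R d L theta_d).
Proof.
move=> theta_d E.
have hL0 : (0 < L)%N by apply: leq_trans hL.
pose r : site d L := [ffun => Ordinal hL0].
have hE : E = - (#|[pred e : site d L * 'I_d | is_edge e]|)%:R by rewrite card_edges.
have hm : - theta_d = th R d false by rewrite /th /sgn /sgR /= mulN1r.
have hp : theta_d = th R d true by rewrite /th /sgn /sgR /= mul1r.
have G0 : [ffun v => gb false false v] = [ffun => false] :> config d L.
  by apply/ffunP => v; rewrite !ffunE /gb.
have G1 : [ffun v => gb false true v] = [ffun => true] :> config d L.
  by apply/ffunP => v; rewrite !ffunE /gb.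
have N0 : [ffun v => gb true false v] = s_config d L.
  by apply/ffunP => v; rewrite !ffunE /gb.
have N1 : [ffun v => gb true true v] = sbar_config d L.
  by apply/ffunP => v; rewrite !ffunE /gb.
have hwm := whip_eq R true hd hL0.
have hwg := whip_eq R false hd hL0.
rewrite -hp in hwm; rewrite -hm in hwg.
have hFT : [ffun => false] != [ffun => true] :> config d L.
  by apply/eqP => /(congr1 (fun f : config d L => f r)); rewrite !ffunE.
have hsb : s_config d L != sbar_config d L.
  by apply/eqP => /(congr1 (fun f : config d L => f r)); rewrite !ffunE; case: (odd _).
have w1 : whip_state (- theta_d) = ghz_state R (d:=d) (L:=L).
  rewrite hwg; apply: functional_extensionality => c.
  rewrite /ghz_state /basis_state big_bool G0 G1 !toCE.
  rewrite rmorphD !rmorphM !rmorph_nat.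
  by case: (c == _); case: (c == _); rewrite /=; ring.
have w2 : whip_state theta_d = neel_state R (d:=d) (L:=L).
  rewrite hwm; apply: functional_extensionality => c.
  rewrite /neel_state /basis_state big_bool N0 N1 !toCE.
  rewrite rmorphD !rmorphM !rmorph_nat.
  by case: (c == _); case: (c == _); rewrite /=; ring.
split; first exact: w1.
split; first exact: w2.
split.
  apply: ground_gen => //; first by right.
    exists [ffun => false]; rewrite hwg big_bool G0 G1 (negbTE hFT) eqxx.
    by apply: toC_neq0; rewrite /= mulr0 add0r mulr1 w_neq0.
  move=> c; rewrite w1 /ghz_state /basis_state => hc e he.
  case: (eqVneq c [ffun => true]) => [->|h1].
    by rewrite !ffunE /sgR; ring.
  case: (eqVneq c [ffun => false]) => [->|h0].
    by rewrite !ffunE /sgR; ring.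
  by move: hc; rewrite (negbTE h0) (negbTE h1) addr0 mulr0 eqxx.
apply: ground_gen => //; first by left.
  exists (s_config d L); rewrite hwm big_bool N0 N1 (negbTE hsb) eqxx.
  by apply: toC_neq0; rewrite /= mulr0 add0r mulr1 w_neq0.
move=> c; rewrite w2 /neel_state /basis_state => hc e he.
have ho : odd (layer (tgt e)) = ~~ odd (layer (src e)) by rewrite layer_tgt.
case: (eqVneq c (sbar_config d L)) => [->|h1].
  by rewrite !ffunE ho /sgR; case: (odd _); rewrite /=; ring.
case: (eqVneq c (s_config d L)) => [->|h0].
  by rewrite !ffunE ho /sgR; case: (odd _); rewrite /=; ring.
by move: hc; rewrite (negbTE h0) (negbTE h1) addr0 mulr0 eqxx.
Qed.
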